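(* Let $\omega_0(n)=(n+1)/\pi$ and consider $\mathcal T$ on $\mathcal X_{\omega_0}$. For $n\ge1$ and $0\le r\le3^n-1$ define finite sets $P^{(n)}_{k,r}\subset\mathbf Q[\xi]$ of polynomials of degree one by $P^{(n)}_{0,r}=\{3^n\xi+r\}$ and, for $k\ge0$, \[P^{(n)}_{k+1,r}=\{2P;\ P\in P^{(n)}_{k,r}\}\cup\{(2P-1)/3;\ P\in P^{(n)}_{k,r},\ P(0)\equiv2\bmod 3\}.\] Then for every $n\ge1$, \[\|\mathcal T^n\|^2=\max_{0\le r\le3^n-1}\ \sum_{a\xi+b\in P^{(n)}_{n,r}}\frac{a}{3^n}.\]
   Context: $T\colon\mathbf Z_+\to\mathbf Z_+$ is the modified Collatz map: $T(n)=n/2$ for $n$ even, $T(n)=(3n+1)/2$ for $n$ odd. $\mathcal X_{\omega_0}$ is the Hilbert space of holomorphic functions $f(z)=\sum_{n\ge3}c_nz^n$ on the unit disk with $\|f\|^2=\sum_{n\ge3}\pi|c_n|^2/(n+1)<\infty$ (the Bergman space modulo $\mathrm{span}[1,z,z^2]$). $\mathcal T\sum_{n\ge3}c_nz^n=\sum_{j\ge3,\,T(j)\ge3}c_jz^{T(j)}$, a bounded operator on $\mathcal X_{\omega_0}$; $\|\cdot\|$ is its operator norm. *)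

(* Defs.v *)
From Stdlib Require Import Reals QArith Qreals List.
From Coquelicot Require Import Coquelicot.
Import ListNotations.
Open Scope R_scope.

Definition collatz (n : nat) : nat :=
  if Nat.even n then Nat.div n 2 else Nat.div (3 * n + 1) 2.

Definition omega0 (n : nat) : R := (INR n + 1) / PI.

(** An element f(z) = sum_{n>=3} c_n z^n of X_{omega_0} is represented by its
    Taylor coefficient sequence c : nat -> C. *)
Definition wterm (c : nat -> C) (n : nat) : R :=
  if (3 <=? n)%nat then (Cmod (c n)) ^ 2 / omega0 n else 0.

Definition inX (c : nat -> C) : Prop :=
  (forall n, (n < 3)%nat -> c n = RtoC 0) /\ ex_series (wterm c).

Definition normX (c : nat -> C) : R := sqrt (Series (wterm c)).

(** The coefficient of z^m (m >= 3) is the sum of c_j over j >= 3 with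
    T(j) = m; every such j satisfies j <= 2m, so the sum is over j in [0, 2m]. *)
Definition Tcoef (c : nat -> C) (m : nat) : C :=
  if (3 <=? m)%nat then
    sum_n (fun j => if ((3 <=? j)%nat && (collatz j =? m)%nat) then c j else RtoC 0)
          (2 * m)
  else RtoC 0.

Definition Tpow (n : nat) (c : nat -> C) : nat -> C := Nat.iter n Tcoef c.

Definition opnorm (n : nat) : Rbar :=
  Lub_Rbar (fun x => exists c, inX c /\ normX c <= 1 /\ x = normX (Tpow n c)).

(** Degree-one polynomials a xi + b in Q[xi], represented as (a, b),
    kept in reduced form (Qred) so that set operations are well defined. *)
Definition poly1 := (Q * Q)%type.

Definition cong2mod3 (b : Q) : bool :=
  let q := Qred b in (Pos.eqb (Qden q) 1 && Z.eqb (Z.modulo (Qnum q) 3) 2)%bool.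

Fixpoint dedupP (l : list poly1) : list poly1 :=
  match l with
  | [] => []
  | x :: l' =>
      if existsb (fun y => (Qeq_bool (fst x) (fst y) && Qeq_bool (snd x) (snd y))%bool) l'
      then dedupP l' else x :: dedupP l'
  end.

Definition Pstep (L : list poly1) : list poly1 :=
  dedupP (map (fun p => (Qred (2 * fst p), Qred (2 * snd p))) L
          ++ map (fun p => (Qred (2 * fst p / 3), Qred ((2 * snd p - 1) / 3)))
                 (filter (fun p => cong2mod3 (snd p)) L)).

Definition Pset (n k r : nat) : list poly1 :=
  Nat.iter k Pstep [(inject_Z (3 ^ Z.of_nat n)%Z, inject_Z (Z.of_nat r))].

Definition Ssum (n r : nat) : R :=
  fold_right (fun p acc => Q2R (fst p) / 3 ^ n + acc) 0 (Pset n n r).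

Definition maxS (n : nat) : R :=
  fold_right (fun r acc => Rmax (Ssum n r) acc) (Ssum n 0) (seq 0 (3 ^ n)).

(* Main.v *)
Require Import Defs.
From Stdlib Require Import Reals QArith Qreals List Lia Arith ZArith Lra.
From Coquelicot Require Import Coquelicot.
Import ListNotations.
Ltac dm x d := pose proof (Nat.div_mod_eq x d); pose proof (Nat.mod_upper_bound x d ltac:(lia)).
Open Scope nat_scope.


Lemma collatz_spec j : (j mod 2 = 0 /\ collatz j * 2 = j \/ j mod 2 = 1 /\ collatz j * 2 = 3*j+1)%nat.
Proof.
  unfold collatz. destruct (Nat.even j) eqn:E.
  - apply Nat.even_spec in E. destruct E as [k ->]. left.
    replace (2*k)%nat with (k*2)%nat by lia. rewrite Nat.div_mul by lia.
    rewrite Nat.mod_mul by lia. lia.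
  - assert (Nat.odd j = true) by (rewrite <- Nat.negb_even, E; reflexivity).
    apply Nat.odd_spec in H. destruct H as [k ->]. right.
    replace (3 * (2 * k + 1) + 1)%nat with ((3*k+2)*2)%nat by lia.
    rewrite Nat.div_mul by lia. dm (2*k+1)%nat 2. lia.
Qed.

Definition f1 (x:nat) := (2*x)%nat.
Definition f2 (x:nat) := ((2*x-1)/3)%nat.
Definition p3 (x:nat) := Nat.eqb (x mod 3) 2.
Definition Gstep (l:list nat) := map f1 l ++ map f2 (filter p3 l).
Definition G k m := Nat.iter k Gstep [m].

Lemma collatz_f1 x : collatz (f1 x) = x.
Proof. unfold f1. destruct (collatz_spec (2*x)) as [[? ?]|[? ?]]; dm (2*x)%nat 2; lia. Qed.

Lemma collatz_f2 x : p3 x = true -> collatz (f2 x) = x.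
Proof. unfold f2, p3. intros H. apply Nat.eqb_eq in H. dm x 3. dm (2*x-1)%nat 3.
  destruct (collatz_spec ((2*x-1)/3)) as [[? ?]|[? ?]]; dm ((2*x-1)/3)%nat 2; lia. Qed.

Lemma f2_inj x y : p3 x = true -> p3 y = true -> f2 x = f2 y -> x = y.
Proof. unfold f2, p3. intros Hx Hy H. apply Nat.eqb_eq in Hx, Hy. dm x 3. dm y 3.
  dm (2*x-1)%nat 3. dm (2*y-1)%nat 3. lia. Qed.

Lemma f1_f2 x y : p3 y = true -> f1 x <> f2 y.
Proof. unfold f1, f2, p3. intros Hy. apply Nat.eqb_eq in Hy. dm y 3. dm (2*y-1)%nat 3.
  dm ((2*y-1)/3)%nat 2. lia. Qed.

Lemma Gstep_nodup l : NoDup l -> NoDup (Gstep l).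
Proof.
  intros H. unfold Gstep. apply NoDup_app.
  - apply NoDup_map_NoDup_ForallPairs; auto. intros a b _ _. unfold f1; lia.
  - apply NoDup_map_NoDup_ForallPairs. 2: apply NoDup_filter; auto.
    intros a b Ha Hb. apply filter_In in Ha, Hb. apply f2_inj; tauto.
  - intros a Ha Hb. apply in_map_iff in Ha as [x [<- _]]. apply in_map_iff in Hb as [y [E Hy]].
    apply filter_In in Hy. apply (f1_f2 x y); [tauto| congruence].
Qed.

Lemma G_nodup k m : NoDup (G k m).
Proof. induction k; simpl. constructor; [simpl; tauto| constructor]. apply Gstep_nodup; auto. Qed.

Lemma G_S k m : G (S k) m = Gstep (G k m).
Proof. reflexivity. Qed.

Lemma in_Gstep j l : In j (Gstep l) -> exists x, In x l /\ (j = f1 x \/ (p3 x = true /\ j = f2 x)).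
Proof. unfold Gstep. intros H. apply in_app_or in H as [H|H].
  - apply in_map_iff in H as [x [<- Hx]]. eauto.
  - apply in_map_iff in H as [x [<- Hx]]. apply filter_In in Hx. exists x; tauto.
Qed.

Lemma G_ge3 k m j : (3 <= m)%nat -> In j (G k m) -> (3 <= j)%nat.
Proof. revert j; induction k; simpl; intros j Hm H.
  - destruct H as [<-|[]]; auto.
  - apply in_Gstep in H as [x [Hx [->|[Hp ->]]]]; specialize (IHk x Hm Hx); unfold f1, f2, p3 in *.
    lia. apply Nat.eqb_eq in Hp. dm x 3. dm (2*x-1)%nat 3. lia.
Qed.

Lemma G_le k m j : In j (G k m) -> (j <= 2^k * m)%nat.
Proof. revert j; induction k; simpl; intros j H.
  - destruct H as [<-|[]]; lia.
  - apply in_Gstep in H as [x [Hx [->|[Hp ->]]]]; specialize (IHk x Hx); unfold f1, f2, p3 in *.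
    lia. dm (2*x-1)%nat 3. lia.
Qed.

Lemma G_T k m j : In j (G k m) -> Nat.iter k collatz j = m.
Proof. revert j; induction k; intros j H.
  - simpl in H. destruct H as [<-|[]]; auto.
  - rewrite Nat.iter_succ_r. rewrite G_S in H.
    apply in_Gstep in H as [x [Hx [->|[Hp ->]]]].
    + rewrite collatz_f1. auto.
    + rewrite collatz_f2; auto.
Qed.

Lemma G_in k m : In (2^k*m)%nat (G k m).
Proof. induction k; simpl. left; lia. unfold Gstep. apply in_or_app; left.
  replace ((2^k + (2^k+0))*m)%nat with (f1 (2^k*m)) by (unfold f1; lia). apply in_map; auto. Qed.

Open Scope nat_scope.

Definition h1 (p : nat*nat) := (2*fst p, 2*snd p).
Definition h2 (p : nat*nat) := (2*fst p/3, (2*snd p-1)/3).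
Definition Bstep (l : list (nat*nat)) := map h1 l ++ map h2 (filter (fun p => p3 (snd p)) l).
Definition B n k r := Nat.iter k Bstep [(3^n, r)].
Definition ev (xi:nat) (p:nat*nat) := fst p * xi + snd p.

Definition Binv n r k (p:nat*nat) := Nat.divide (3^(n-k)) (fst p) /\ 3^n*(snd p+1) <= fst p*(r+1)
   /\ fst p*(r+1) <= 3^n*(snd p + 2^k).

Lemma in_Bstep p l : In p (Bstep l) -> exists q, In q l /\ (p = h1 q \/ (p3 (snd q) = true /\ p = h2 q)).
Proof. unfold Bstep. intros H. apply in_app_or in H as [H|H].
  - apply in_map_iff in H as [x [<- Hx]]. eauto.
  - apply in_map_iff in H as [x [<- Hx]]. apply filter_In in Hx. exists x; tauto.
Qed.

Lemma B_S n k r : B n (S k) r = Bstep (B n k r).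
Proof. reflexivity. Qed.

Lemma B_inv n r k : k <= n -> List.Forall (Binv n r k) (B n k r).
Proof.
  induction k; intros Hk.
  - simpl. constructor; [|constructor]. unfold Binv; simpl. rewrite Nat.sub_0_r.
    split; [exists 1; lia|]. split; nia.
  - rewrite B_S. apply Forall_forall. intros p Hp. apply in_Bstep in Hp as [[a b] [Hq Hc]].
    specialize (IHk ltac:(lia)). rewrite Forall_forall in IHk. specialize (IHk _ Hq).
    destruct IHk as [[t Ht] [I1 I2]]. simpl in *.
    replace (n - k) with (S (n - S k)) in Ht by lia. simpl in Ht.
    set (e := 3 ^ (n - S k)) in *. set (N := 3^n) in *.
    destruct Hc as [->|[Hp ->]]; unfold Binv, h1, h2; cbn [fst snd]; rewrite Nat.pow_succ_r'; fold N.
    + split. exists (2*t*3). fold e. lia. split; nia.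
    + unfold p3 in Hp. apply Nat.eqb_eq in Hp. dm b 3. dm (2*b-1) 3.
      assert (E: 2*a/3 = 2*(t*e)). { subst a. replace (2*(t*(e+(e+(e+0))))) with (2*(t*e)*3) by lia.
        apply Nat.div_mul; lia. }
      rewrite E. fold e. split. exists (2*t). lia.
      set (b' := (2*b-1)/3) in *.
      assert (3*b'+1 = 2*b) by lia.
      assert (N*(3*b'+1) = N*(2*b)) by (f_equal; auto).
      split; nia.
Qed.

Lemma filter_map_c {A B'} (f : B' -> bool) (g : A -> B') l : filter f (map g l) = map g (filter (fun x => f (g x)) l).
Proof. induction l; simpl; auto. destruct (f (g a)); simpl; congruence. Qed.

Lemma div3_of n k a : k < n -> Nat.divide (3^(n-k)) a -> exists T, a = 3*T.
Proof. intros Hk [t Ht]. replace (n-k) with (S (n - S k)) in Ht by lia. rewrite Nat.pow_succ_r' in Ht.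
  exists (t * 3^(n - S k)). lia. Qed.

Lemma B_G n r xi k : k <= n -> G k (3^n*xi + r) = map (ev xi) (B n k r).
Proof.
  induction k; intros Hk. { simpl. unfold ev. simpl. f_equal. }
  rewrite G_S, B_S, IHk by lia. pose proof (B_inv n r k ltac:(lia)) as HI.
  rewrite Forall_forall in HI.
  unfold Gstep, Bstep. rewrite !map_app, !map_map. f_equal.
  - apply map_ext. intros [a b]. unfold f1, ev, h1; cbn [fst snd]. lia.
  - rewrite filter_map_c, map_map.
    assert (filter (fun x => p3 (ev xi x)) (B n k r) = filter (fun p => p3 (snd p)) (B n k r)) as ->.
    { apply filter_ext_in. intros [a b] Hp. destruct (HI _ Hp) as [Hd _]. cbn [fst] in Hd.
      destruct (div3_of n k a ltac:(lia) Hd) as [T ->]. unfold p3, ev; cbn [fst snd].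
      replace (3*T*xi+b) with (b + (T*xi)*3) by lia. rewrite Nat.Div0.mod_add. reflexivity. }
    apply map_ext_in. intros [a b] Hp. apply filter_In in Hp as [Hp Hq]. destruct (HI _ Hp) as [Hd _].
    cbn [fst snd] in *. destruct (div3_of n k a ltac:(lia) Hd) as [T ->].
    unfold f2, ev, h2, p3 in *; cbn [fst snd]. apply Nat.eqb_eq in Hq.
    replace (2*(3*T)/3) with (2*T) by (replace (2*(3*T)) with (2*T*3) by lia; rewrite Nat.div_mul; lia).
    dm b 3. dm (2*b-1) 3. 
    replace (2 * (3 * T * xi + b) - 1) with ((2*b-1) + (2*T*xi)*3) by lia.
    rewrite Nat.div_add by lia. lia.
Qed.

Lemma B_len n k r : length (B n k r) <= 2^k.
Proof. induction k; simpl; auto. unfold Bstep. rewrite length_app, !length_map.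
  pose proof (filter_length_le (fun p => p3 (snd p)) (B n k r)). fold (B n k r). lia. Qed.

Lemma B_nodup n k r : k <= n -> NoDup (B n k r).
Proof. intros Hk. apply (NoDup_map_inv (ev 0)). rewrite <- B_G by auto. apply G_nodup. Qed.

Open Scope nat_scope.

Definition iZ (a : nat) : Q := inject_Z (Z.of_nat a).
Definition toQ (p : nat*nat) : poly1 := (iZ (fst p), iZ (snd p)).

Lemma Qred_iZ q a : (q == iZ a)%Q -> Qred q = iZ a.
Proof. intros H. rewrite (Qred_complete _ _ H). unfold Qred, iZ, inject_Z. simpl.
  set (z := Z.of_nat a). destruct (Z.ggcd z 1) as [g [u v]] eqn:E.
  pose proof (Z.ggcd_gcd z 1) as H1. rewrite E in H1. simpl in H1. rewrite Z.gcd_1_r in H1. subst g.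
  pose proof (Z.ggcd_correct_divisors z 1) as H2. rewrite E in H2. destruct H2 as [H2 H3].
  rewrite Z.mul_1_l in H2, H3. subst. reflexivity. Qed.

Lemma cong_iZ b : cong2mod3 (iZ b) = p3 b.
Proof. unfold cong2mod3. rewrite (Qred_iZ (iZ b) b) by reflexivity. unfold iZ, p3, inject_Z. cbn [Qden Qnum Pos.eqb andb].
  destruct (Z.eqb_spec (Z.of_nat b mod 3) 2) as [e1|n1]; destruct (Nat.eqb_spec (b mod 3) 2) as [e2|n2]; auto; exfalso.
  - apply n2. apply Nat2Z.inj. rewrite Nat2Z.inj_mod. exact e1.
  - apply n1. change 3%Z with (Z.of_nat 3). rewrite <- Nat2Z.inj_mod, e2. reflexivity.
Qed.

Lemma dedup_toQ L : NoDup L -> dedupP (map toQ L) = map toQ L.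
Proof.
  induction L as [|x L IH]; intros H; simpl; auto. inversion H; subst.
  destruct (existsb _ _) eqn:E.
  - exfalso. apply existsb_exists in E as [y [Hy Hq]]. apply in_map_iff in Hy as [z [<- Hz]].
    apply andb_true_iff in Hq as [Hq1 Hq2]. apply Qeq_bool_iff in Hq1, Hq2.
    destruct x as [x1 x2], z as [z1 z2]. unfold toQ, iZ, Qeq in Hq1, Hq2; cbn [fst snd Qnum Qden inject_Z] in Hq1, Hq2.
    assert (x1 = z1) by lia. assert (x2 = z2) by lia. subst. auto.
  - rewrite IH; auto.
Qed.

Lemma Pset_B n k r : k <= n -> Pset n k r = map toQ (B n k r).
Proof.
  induction k; intros Hk.
  - simpl. unfold toQ, iZ. simpl. rewrite Nat2Z.inj_pow. reflexivity.
  - change (Pset n (S k) r) with (Pstep (Pset n k r)). rewrite IHk by lia. rewrite B_S.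
    pose proof (B_inv n r k ltac:(lia)) as HI. rewrite Forall_forall in HI.
    unfold Pstep. transitivity (dedupP (map toQ (Bstep (B n k r)))).
    2: { apply dedup_toQ. rewrite <- B_S; apply B_nodup; auto. }
    f_equal. unfold Bstep. rewrite map_app, !map_map. f_equal.
    + apply map_ext. intros [a b]. unfold toQ, h1; cbn [fst snd]. f_equal; apply Qred_iZ;
      unfold iZ, Qeq, Qdiv, Qminus; cbn [Qnum Qden Qmult Qinv Qplus Qopp inject_Z]; lia.
    + rewrite filter_map_c. rewrite map_map.
      assert (filter (fun x => cong2mod3 (snd (toQ x))) (B n k r) = filter (fun p => p3 (snd p)) (B n k r)) as ->.
      { apply filter_ext. intros [a b]. unfold toQ. simpl. apply cong_iZ. }
      apply map_ext_in. intros [a b] Hp. apply filter_In in Hp as [Hp Hq]. destruct (HI _ Hp) as [Hd _].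
      cbn [fst snd] in *. destruct (div3_of n k a ltac:(lia) Hd) as [T ->].
      unfold toQ, h2, p3 in *; cbn [fst snd]. apply Nat.eqb_eq in Hq.
      replace (2*(3*T)/3) with (2*T) by (replace (2*(3*T)) with (2*T*3) by lia; rewrite Nat.div_mul; lia).
      dm b 3. dm (2*b-1) 3.
      f_equal; apply Qred_iZ; unfold iZ, Qeq, Qdiv, Qminus; cbn [Qnum Qden Qmult Qinv Qplus Qopp inject_Z]; lia.
Qed.

Open Scope R_scope.

Definition lsum {A} (f : A -> R) (l : list A) : R := fold_right (fun x acc => f x + acc) 0 l.

Lemma lsum_app {A} (f : A -> R) l1 l2 : lsum f (l1 ++ l2) = lsum f l1 + lsum f l2.
Proof. induction l1; simpl; [lra|]. unfold lsum in *; simpl. rewrite IHl1. lra. Qed.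
Lemma lsum_map {A B} (f : B -> R) (g : A -> B) l : lsum f (map g l) = lsum (fun x => f (g x)) l.
Proof. induction l; simpl; auto. unfold lsum in *; simpl. rewrite IHl. auto. Qed.
Lemma lsum_le {A} (f g : A -> R) l : (forall x, In x l -> f x <= g x) -> lsum f l <= lsum g l.
Proof. induction l; simpl; intros H; [lra|]. unfold lsum in *; simpl.
  pose proof (H a (or_introl eq_refl)). pose proof (IHl (fun x Hx => H x (or_intror Hx))). lra. Qed.
Lemma lsum_ext {A} (f g : A -> R) l : (forall x, In x l -> f x = g x) -> lsum f l = lsum g l.
Proof. induction l; simpl; intros H; auto. unfold lsum in *; simpl.
  rewrite (H a (or_introl eq_refl)), (IHl (fun x Hx => H x (or_intror Hx))). auto. Qed.
Lemma lsum_plus {A} (f g : A -> R) l : lsum (fun x => f x + g x) l = lsum f l + lsum g l.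
Proof. induction l; simpl; [lra|]. unfold lsum in *; simpl. rewrite IHl. lra. Qed.
Lemma lsum_scal {A} (c : R) (f : A -> R) l : lsum (fun x => c * f x) l = c * lsum f l.
Proof. induction l; simpl; [lra|]. unfold lsum in *; simpl. rewrite IHl. lra. Qed.
Lemma lsum_const {A} (c : R) (l : list A) : lsum (fun _ => c) l = INR (length l) * c.
Proof. induction l; simpl; [lra|]. unfold lsum in *; simpl. rewrite IHl. destruct (length l); simpl; lra. Qed.
Lemma lsum_nonneg {A} (f : A -> R) l : (forall x, In x l -> 0 <= f x) -> 0 <= lsum f l.
Proof. intros H. replace 0 with (lsum (fun _ => 0) l). apply lsum_le; auto.
  rewrite lsum_const. lra. Qed.

Lemma INR3 : INR 3 = 3. Proof. simpl. lra. Qed.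
Lemma INR2 : INR 2 = 2. Proof. simpl. lra. Qed.

Lemma Ssum_B n r : Ssum n r = lsum (fun p => INR (fst p) / 3^n) (B n n r).
Proof. unfold Ssum. rewrite Pset_B by lia. induction (B n n r); simpl; auto.
  rewrite IHl. f_equal. f_equal. unfold toQ, iZ, Q2R, inject_Z. simpl. rewrite INR_IZR_INZ. lra. Qed.

Lemma pow3_pos n : 0 < 3 ^ n. Proof. apply pow_lt. lra. Qed.

Lemma upper_G n m : lsum (fun j => INR j + 1) (G n m) <= (INR m + 1) * Ssum n (m mod 3^n).
Proof.
  set (r := (m mod 3^n)%nat). set (xi := (m / 3^n)%nat).
  assert (Hm : m = (3^n * xi + r)%nat) by (apply Nat.div_mod_eq).
  rewrite Hm at 1. rewrite B_G by lia. rewrite lsum_map, Ssum_B, <- lsum_scal.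
  apply lsum_le. intros [a b] Hp. pose proof (B_inv n r n (le_n _)) as HI. rewrite Forall_forall in HI.
  destruct (HI _ Hp) as [_ [I1 _]]. cbn [fst snd] in *. unfold ev; cbn [fst snd].
  assert (N: (3^n * (a*xi+b+1) <= a * (m+1))%nat) by (rewrite Hm; nia).
  apply le_INR in N. rewrite !mult_INR, !plus_INR, pow_INR, INR3, mult_INR in N. simpl (INR 1) in N.
  pose proof (pow3_pos n).
  apply (Rmult_le_reg_l (3^n)); auto.
  replace (3 ^ n * ((INR m + 1) * (INR a / 3 ^ n))) with (INR a * (INR m + 1)) by (field; lra).
  rewrite plus_INR, mult_INR. lra.
Qed.

Lemma lower_G n r xi : (INR (3^n*xi+r) + 1) * Ssum n r <= lsum (fun j => INR j + 1) (G n (3^n*xi+r)) + 2^n * 2^n.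
Proof.
  set (m := (3^n*xi+r)%nat). unfold m at 2. rewrite B_G by lia. rewrite lsum_map, Ssum_B, <- lsum_scal.
  apply Rle_trans with (lsum (fun p => INR (ev xi p) + 1 + 2^n) (B n n r)).
  - apply lsum_le. intros [a b] Hp. pose proof (B_inv n r n (le_n _)) as HI. rewrite Forall_forall in HI.
    destruct (HI _ Hp) as [_ [_ I2]]. cbn [fst snd] in *. unfold ev; cbn [fst snd].
    assert (N: (a * (m+1) <= 3^n * (a*xi+b+1) + 3^n*2^n)%nat) by (unfold m; nia).
    apply le_INR in N. rewrite !plus_INR, !mult_INR, !plus_INR, !pow_INR, INR3, INR2, mult_INR in N. simpl (INR 1) in N.
    pose proof (pow3_pos n).
    apply (Rmult_le_reg_l (3^n)); auto.
    replace (3 ^ n * ((INR m + 1) * (INR a / 3 ^ n))) with (INR a * (INR m + 1)) by (field; lra).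
    rewrite plus_INR, mult_INR. lra.
  - rewrite lsum_plus, lsum_const. pose proof (B_len n n r) as L. apply le_INR in L. rewrite pow_INR, INR2 in L.
    assert (0 <= 2^n) by (apply pow_le; lra). nra.
Qed.

Lemma Ssum_nonneg n r : 0 <= Ssum n r.
Proof. rewrite Ssum_B. apply lsum_nonneg. intros. pose proof (pow3_pos n). pose proof (pos_INR (fst x)).
  apply Rdiv_le_0_compat; lra. Qed.

Lemma fold_max_ge (f : nat -> R) init l : init <= fold_right (fun r acc => Rmax (f r) acc) init l /\
  forall r, In r l -> f r <= fold_right (fun r acc => Rmax (f r) acc) init l.
Proof. induction l; simpl. split; [lra| tauto]. destruct IHl as [H1 H2]. split.
  - eapply Rle_trans; [apply H1| apply Rmax_r].
  - intros r [<-|Hr]. apply Rmax_l. eapply Rle_trans; [apply H2; auto| apply Rmax_r]. Qed.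

Lemma fold_max_in (f : nat -> R) init l : fold_right (fun r acc => Rmax (f r) acc) init l = init \/
  exists r, In r l /\ fold_right (fun r acc => Rmax (f r) acc) init l = f r.
Proof. induction l; simpl. auto.
  destruct (Rle_lt_dec (f a) (fold_right (fun r acc => Rmax (f r) acc) init l)) as [Hle|Hlt].
  - rewrite Rmax_right by auto. destruct IHl as [H|[r0 [Hr H]]]; [left; auto|]. right. exists r0; auto.
  - rewrite Rmax_left by lra. right. exists a; auto. Qed.

Lemma maxS_ge n r : (r < 3^n)%nat -> Ssum n r <= maxS n.
Proof. intros H. apply (fold_max_ge (Ssum n)). apply in_seq. lia. Qed.

Lemma maxS_attained n : exists r, (r < 3^n)%nat /\ maxS n = Ssum n r.
Proof. unfold maxS. destruct (fold_max_in (Ssum n) (Ssum n 0) (seq 0 (3^n))) as [H|[r [Hr H]]].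
  - exists 0%nat. split; auto. pose proof (Nat.pow_nonzero 3 n). lia.
  - exists r. apply in_seq in Hr. split; [lia| auto]. Qed.

Open Scope R_scope.

Definition csum (c : nat -> C) (l : list nat) : C := fold_right (fun j acc => Cplus (c j) acc) (RtoC 0) l.

Lemma csum_app c l1 l2 : csum c (l1 ++ l2) = Cplus (csum c l1) (csum c l2).
Proof. induction l1; simpl. rewrite Cplus_0_l; auto. unfold csum in *; simpl. rewrite IHl1. ring. Qed.
Lemma csum_map c g l : csum c (map g l) = csum (fun x => c (g x)) l.
Proof. induction l; simpl; auto. unfold csum in *; simpl. rewrite IHl. auto. Qed.
Lemma csum_ext c d l : (forall x, In x l -> c x = d x) -> csum c l = csum d l.
Proof. induction l; simpl; intros H; auto. unfold csum in *; simpl.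
  rewrite (H a (or_introl eq_refl)), (IHl (fun x Hx => H x (or_intror Hx))). auto. Qed.
Lemma csum_plus c d l : csum (fun x => Cplus (c x) (d x)) l = Cplus (csum c l) (csum d l).
Proof. induction l; simpl. unfold csum; simpl. ring. unfold csum in *; simpl. rewrite IHl. ring. Qed.
Lemma csum_filter c (p : nat -> bool) l : csum (fun x => if p x then c x else RtoC 0) l = csum c (filter p l).
Proof. induction l; simpl; auto. unfold csum in *; simpl. destruct (p a); simpl; rewrite IHl; auto. ring. Qed.

Lemma sumC_plus (a b : nat -> C) n : sum_n (fun k => Cplus (a k) (b k)) n = Cplus (sum_n a n) (sum_n b n).
Proof. exact (sum_n_plus a b n). Qed.

Lemma spikeC (x : nat) (v : C) N : sum_n (fun j => if Nat.eqb j x then v else RtoC 0) N = if Nat.leb x N then v else RtoC 0.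
Proof. induction N.
  - rewrite sum_O. destruct x; simpl; auto.
  - rewrite sum_Sn, IHN. change plus with Cplus.
    destruct (Nat.eqb_spec (S N) x); destruct (Nat.leb_spec x N); destruct (Nat.leb_spec x (S N)); try lia;
    rewrite ?Cplus_0_l, ?Cplus_0_r; auto.
Qed.

Lemma spikeR (x : nat) (v : R) N : sum_n (fun j => if Nat.eqb j x then v else 0) N = if Nat.leb x N then v else 0.
Proof. induction N.
  - rewrite sum_O. destruct x; simpl; auto.
  - rewrite sum_Sn, IHN. change plus with Rplus.
    destruct (Nat.eqb_spec (S N) x); destruct (Nat.leb_spec x N); destruct (Nat.leb_spec x (S N)); try lia; lra.
Qed.

Lemma collatz_char j m : (3 <= m)%nat -> collatz j = m -> j = f1 m \/ (p3 m = true /\ j = f2 m).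
Proof. intros Hm H. destruct (collatz_spec j) as [[A B']|[A B']]; rewrite H in B'.
  - left. unfold f1. lia.
  - right. unfold p3, f2. dm m 3%nat. dm (2*m-1)%nat 3%nat. split. apply Nat.eqb_eq. lia. lia.
Qed.

Lemma Tcoef_eq c m : (3 <= m)%nat -> Tcoef c m = Cplus (c (f1 m)) (if p3 m then c (f2 m) else RtoC 0).
Proof.
  intros Hm. unfold Tcoef. destruct (Nat.leb_spec 3 m); [|lia].
  rewrite (sum_n_ext _ (fun j => Cplus (if Nat.eqb j (f1 m) then c (f1 m) else RtoC 0)
     (if Nat.eqb j (f2 m) then (if p3 m then c (f2 m) else RtoC 0) else RtoC 0))).
  - rewrite sumC_plus, !spikeC.
    replace (Nat.leb (f1 m) (2*m)) with true by (symmetry; apply Nat.leb_le; unfold f1; lia).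
    replace (Nat.leb (f2 m) (2*m)) with true by (symmetry; apply Nat.leb_le; unfold f2; dm (2*m-1)%nat 3%nat; lia).
    auto.
  - intros j. assert (f1 m <> f2 m) by (unfold f1, f2; dm (2*m-1)%nat 3%nat; lia).
    destruct (Nat.leb_spec 3 j); destruct (Nat.eqb_spec (collatz j) m) as [e|ne]; simpl.
    + destruct (collatz_char j m H e) as [->|[Hp ->]].
      * rewrite Nat.eqb_refl. destruct (Nat.eqb_spec (f1 m) (f2 m)); [congruence|]. ring.
      * rewrite Hp, Nat.eqb_refl. destruct (Nat.eqb_spec (f2 m) (f1 m)); [congruence|]. ring.
    + destruct (Nat.eqb_spec j (f1 m)). { subst. rewrite collatz_f1 in ne. congruence. }
      destruct (Nat.eqb_spec j (f2 m)). { destruct (p3 m) eqn:Hp. subst. rewrite collatz_f2 in ne; auto. congruence. ring. }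
      ring.
    + destruct (Nat.eqb_spec j (f1 m)). { unfold f1 in *; lia. }
      destruct (Nat.eqb_spec j (f2 m)). { destruct (p3 m) eqn:Hp. unfold f2, p3 in *. apply Nat.eqb_eq in Hp.
        dm m 3%nat. dm (2*m-1)%nat 3%nat. lia. ring. }
      ring.
    + destruct (Nat.eqb_spec j (f1 m)). { unfold f1 in *; lia. }
      destruct (Nat.eqb_spec j (f2 m)). { destruct (p3 m) eqn:Hp. unfold f2, p3 in *. apply Nat.eqb_eq in Hp.
        dm m 3%nat. dm (2*m-1)%nat 3%nat. lia. ring. }
      ring.
Qed.

Lemma Tpow_eq k c m : (3 <= m)%nat -> Tpow k c m = csum c (G k m).
Proof.
  revert c. induction k; intros c Hm.
  - simpl. unfold csum; simpl. rewrite Cplus_0_r. auto.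
  - unfold Tpow. rewrite Nat.iter_succ_r. fold (Tpow k (Tcoef c)). rewrite IHk by auto.
    rewrite (csum_ext _ (fun x => Cplus (c (f1 x)) (if p3 x then c (f2 x) else RtoC 0))).
    + rewrite csum_plus, csum_filter, G_S. unfold Gstep. rewrite csum_app, !csum_map. auto.
    + intros x Hx. apply Tcoef_eq. eapply G_ge3; eauto.
Qed.

Open Scope R_scope.

Lemma Cmod_csum c l : Cmod (csum c l) <= lsum (fun j => Cmod (c j)) l.
Proof. induction l; simpl. unfold csum; simpl. rewrite Cmod_0. unfold lsum; simpl; lra.
  unfold csum, lsum in *; simpl. eapply Rle_trans. apply Cmod_triangle. lra. Qed.

Lemma lsum_cons {A} (f : A -> R) a l : lsum f (a :: l) = f a + lsum f l.
Proof. reflexivity. Qed.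

Lemma CS {A} (u w : A -> R) l : (forall x, In x l -> 0 < w x) ->
  (lsum u l)^2 <= lsum w l * lsum (fun x => u x ^2 / w x) l.
Proof.
  induction l as [|a l IH]; intros H. unfold lsum; simpl; lra.
  assert (IH' := IH (fun x Hx => H x (or_intror Hx))). assert (Hw := H a (or_introl eq_refl)).
  assert (W0 : 0 <= lsum w l) by (apply lsum_nonneg; intros x Hx; left; apply H; right; auto).
  assert (B0 : 0 <= lsum (fun x => u x ^2 / w x) l).
  { apply lsum_nonneg. intros x Hx. pose proof (H x (or_intror Hx)). apply Rdiv_le_0_compat; nra. }
  rewrite !lsum_cons.
  set (U := u a) in *. set (v := U^2 / w a). assert (Hv : U^2 = v * w a) by (unfold v; field; lra).
  assert (v0 : 0 <= v) by (unfold v; apply Rdiv_le_0_compat; nra).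
  set (A0 := lsum u l) in *. set (W := lsum w l) in *. set (Bq := lsum (fun x => u x ^2 / w x) l) in *.
  assert (K : (2*U*A0)^2 <= (w a * Bq + W * v)^2).
  { assert (4*U^2*A0^2 <= 4 * (v*w a) * (W*Bq)).
    { rewrite Hv. apply Rmult_le_compat_l. assert (0 <= v * w a) by nra. lra. lra. }
    assert (0 <= (w a * Bq - W*v)^2) by apply pow2_ge_0.
    replace ((2*U*A0)^2) with (4*U^2*A0^2) by ring.
    replace ((w a * Bq + W * v)^2) with ((w a * Bq - W*v)^2 + 4 * (v * w a) * (W * Bq)) by ring.
    lra. }
  assert (S0: 0 <= w a * Bq + W*v) by (apply Rplus_le_le_0_compat; apply Rmult_le_pos; lra).
  assert (K2 : 2*U*A0 <= w a * Bq + W * v).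
  { destruct (Rle_lt_dec (2*U*A0) (w a*Bq+W*v)) as [?|Hlt]; auto. exfalso.
    assert (0 < 2*U*A0 + (w a*Bq+W*v)) by lra.
    assert (0 < (2*U*A0 - (w a*Bq+W*v)) * (2*U*A0 + (w a*Bq+W*v))) by (apply Rmult_lt_0_compat; lra).
    nra. }
  fold v. replace ((U + A0)^2) with (U^2 + 2*U*A0 + A0^2) by ring. rewrite Hv.
  replace ((w a + W) * (v + Bq)) with (v * w a + (w a * Bq + W * v) + W * Bq) by ring. lra.
Qed.

Lemma omega0_pos j : 0 < omega0 j.
Proof. unfold omega0. pose proof (pos_INR j). pose proof PI_RGT_0. apply Rdiv_lt_0_compat; lra. Qed.

Lemma wterm_nonneg c j : 0 <= wterm c j.
Proof. unfold wterm. destruct (3 <=? j)%nat; [|lra]. pose proof (omega0_pos j).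
  apply Rdiv_le_0_compat; auto. apply pow2_ge_0. Qed.

Lemma maxS_nonneg n : 0 <= maxS n.
Proof. eapply Rle_trans. apply (Ssum_nonneg n 0). apply maxS_ge. pose proof (Nat.pow_nonzero 3 n). lia. Qed.

Lemma wterm_bound n c m : (3 <= m)%nat -> wterm (Tpow n c) m <= maxS n * lsum (wterm c) (G n m).
Proof.
  intros Hm. unfold wterm at 1. destruct (Nat.leb_spec 3 m); [|lia].
  rewrite Tpow_eq by auto. set (l := G n m).
  pose proof (Cmod_csum c l) as H1. pose proof (Cmod_ge_0 (csum c l)).
  pose proof (CS (fun j => Cmod (c j)) omega0 l (fun x _ => omega0_pos x)) as H2.
  assert (E : lsum (fun x => Cmod (c x) ^ 2 / omega0 x) l = lsum (wterm c) l).
  { apply lsum_ext. intros x Hx. unfold wterm. destruct (Nat.leb_spec 3 x); auto.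
    pose proof (G_ge3 n m x Hm Hx). lia. }
  cbv beta in H2. rewrite E in H2.
  assert (E2 : lsum omega0 l = lsum (fun j => INR j + 1) l / PI).
  { unfold Rdiv. rewrite Rmult_comm, <- lsum_scal. apply lsum_ext. intros. unfold omega0. field.
    apply PI_neq0. }
  pose proof (upper_G n m) as H3. fold l in H3.
  set (r := (m mod 3^n)%nat) in *.
  assert (Hr : (r < 3^n)%nat) by (apply Nat.mod_upper_bound; apply Nat.pow_nonzero; lia).
  pose proof (maxS_ge n r Hr). pose proof (Ssum_nonneg n r).
  pose proof (lsum_nonneg (wterm c) l (fun x _ => wterm_nonneg c x)).
  pose proof (omega0_pos m). pose proof PI_RGT_0.
  assert (Cmod (csum c l) ^ 2 <= lsum (fun j => Cmod (c j)) l ^2) by (apply pow_incr; lra).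
  apply Rle_trans with (lsum omega0 l * lsum (wterm c) l / omega0 m).
  { unfold Rdiv. apply Rmult_le_compat_r. left. apply Rinv_0_lt_compat; auto. lra. }
  rewrite E2. unfold omega0. 
  apply Rle_trans with (Ssum n r * lsum (wterm c) l); [|nra].
  assert (0 < INR m + 1) by (pose proof (pos_INR m); lra).
  replace (lsum (fun j => INR j + 1) l / PI * lsum (wterm c) l / ((INR m + 1) / PI)) with
    (lsum (fun j => INR j + 1) l / (INR m + 1) * lsum (wterm c) l) by (field; lra).
  apply Rmult_le_compat_r; auto.
  apply Rle_div_l; auto. lra.
Qed.

Open Scope R_scope.

Lemma sum_n_lsum (g : nat -> R) N : sum_n g N = lsum g (seq 0 (S N)).
Proof. induction N. rewrite sum_O. unfold lsum; simpl; lra.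
  rewrite sum_Sn, IHN. change plus with Rplus. rewrite (seq_S (S N)), lsum_app. unfold lsum at 3; simpl. lra. Qed.

Lemma sumR_plus (a b : nat -> R) n : sum_n (fun k => a k + b k) n = sum_n a n + sum_n b n.
Proof. exact (sum_n_plus a b n). Qed.

Lemma indicator (g : nat -> R) l K : NoDup l -> (forall x, In x l -> (x <= K)%nat) ->
  sum_n (fun j => if existsb (Nat.eqb j) l then g j else 0) K = lsum g l.
Proof.
  induction l as [|x l IH]; intros Hn Hb.
  - simpl. rewrite sum_n_lsum, lsum_const. unfold lsum; simpl; lra.
  - inversion Hn; subst. rewrite lsum_cons, <- IH by (auto; intros; apply Hb; right; auto).
    rewrite (sum_n_ext _ (fun j => (if Nat.eqb j x then g x else 0) + (if existsb (Nat.eqb j) l then g j else 0))).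
    + rewrite sumR_plus, spikeR. replace (Nat.leb x K) with true. auto.
      symmetry. apply Nat.leb_le. apply Hb. left; auto.
    + intros j. simpl. destruct (Nat.eqb_spec j x).
      * subst. simpl. destruct (existsb (Nat.eqb x) l) eqn:E.
        -- apply existsb_exists in E as [y [Hy Hxy]]. apply Nat.eqb_eq in Hxy. subst. tauto.
        -- lra.
      * simpl. lra.
Qed.

Lemma lsum_le_sum_n (g : nat -> R) l K : NoDup l -> (forall x, In x l -> (x <= K)%nat) ->
  (forall j, 0 <= g j) -> lsum g l <= sum_n g K.
Proof. intros H1 H2 H3. rewrite <- (indicator g l K H1 H2). rewrite !sum_n_lsum. apply lsum_le.
  intros x _. destruct (existsb _ _); [lra| apply H3]. Qed.

Lemma lsum_flat_map {A B} (f : B -> R) (h : A -> list B) l : lsum f (flat_map h l) = lsum (fun x => lsum f (h x)) l.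
Proof. induction l; simpl; auto. rewrite lsum_app, IHl. reflexivity. Qed.

Lemma nodup_flat_map {A B} (h : A -> list B) l : NoDup l -> (forall x, NoDup (h x)) ->
  (forall x y j, In j (h x) -> In j (h y) -> x = y) -> NoDup (flat_map h l).
Proof. induction l; intros H1 H2 H3; simpl. constructor. inversion H1; subst.
  apply NoDup_app; auto. intros j Hj Hj'. apply in_flat_map in Hj' as [y [Hy Hjy]].
  rewrite (H3 _ _ _ Hj Hjy) in H4. contradiction. Qed.

Definition Hf n m := if Nat.leb 3 m then G n m else [].

Lemma partial_bound n c N : sum_n (wterm (Tpow n c)) N <= maxS n * sum_n (wterm c) (2^n * N).
Proof.
  rewrite (sum_n_lsum (wterm (Tpow n c))).
  apply Rle_trans with (lsum (fun m => maxS n * lsum (wterm c) (Hf n m)) (seq 0 (S N))).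
  - apply lsum_le. intros m _. unfold Hf. destruct (Nat.leb_spec 3 m).
    + apply wterm_bound; auto.
    + unfold wterm. destruct (Nat.leb_spec 3 m); [lia|]. unfold lsum; simpl. lra.
  - rewrite lsum_scal, <- lsum_flat_map. apply Rmult_le_compat_l. apply maxS_nonneg.
    apply lsum_le_sum_n.
    + apply nodup_flat_map. apply seq_NoDup. intros x; unfold Hf; destruct (Nat.leb 3 x); [apply G_nodup| constructor].
      intros x y j. unfold Hf. destruct (Nat.leb 3 x), (Nat.leb 3 y); simpl; try tauto.
      intros H1 H2. apply G_T in H1, H2. congruence.
    + intros j Hj. apply in_flat_map in Hj as [m [Hm Hj]]. apply in_seq in Hm. unfold Hf in Hj.
      destruct (Nat.leb 3 m); [|destruct Hj]. apply G_le in Hj. nia.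
    + apply wterm_nonneg.
Qed.

Lemma sum_n_mono (a : nat -> R) N k : (forall j, 0 <= a j) -> sum_n a N <= sum_n a (N + k).
Proof. intros H. induction k. rewrite Nat.add_0_r; lra. rewrite Nat.add_succ_r, sum_Sn.
  change plus with Rplus. pose proof (H (S (N+k))). lra. Qed.

Lemma partial_le_Series (a : nat -> R) N : (forall j, 0 <= a j) -> ex_series a -> sum_n a N <= Series a.
Proof.
  intros H He. pose proof (Series_correct a He) as Hs.
  assert (L : is_lim_seq (sum_n a) (Series a)) by exact Hs.
  apply is_lim_seq_unique in L.
  assert (Rbar_le (Lim_seq (fun _ => sum_n a N)) (Lim_seq (sum_n a))).
  { apply Lim_seq_le_loc. exists N. intros k Hk. replace k with (N + (k - N))%nat by lia. apply sum_n_mono; auto. }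
  rewrite Lim_seq_const, L in H0. simpl in H0. auto.
Qed.

Lemma Series_le_bound (a : nat -> R) Bd : (forall j, 0 <= a j) -> (forall N, sum_n a N <= Bd) -> Series a <= Bd.
Proof.
  intros H1 H2. unfold Series.
  assert (U : Rbar_le (Lim_seq (sum_n a)) (Lim_seq (fun _ => Bd))).
  { apply Lim_seq_le_loc. exists 0%nat. intros; auto. }
  assert (Lo : Rbar_le (Lim_seq (fun _ => 0)) (Lim_seq (sum_n a))).
  { apply Lim_seq_le_loc. exists 0%nat. intros k _. rewrite sum_n_lsum. apply lsum_nonneg. auto. }
  rewrite Lim_seq_const in U, Lo. destruct (Lim_seq (sum_n a)); simpl in *; auto. contradiction.
  pose proof (H2 0%nat). rewrite sum_O in H. pose proof (H1 0%nat). lra.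
Qed.

Lemma Series_T_bound n c : inX c -> Series (wterm (Tpow n c)) <= maxS n * Series (wterm c).
Proof.
  intros [_ He]. apply Series_le_bound. apply wterm_nonneg.
  intros N. eapply Rle_trans. apply partial_bound. apply Rmult_le_compat_l. apply maxS_nonneg.
  apply partial_le_Series; auto. apply wterm_nonneg.
Qed.

Open Scope R_scope.

Lemma finite_series (f : nat -> R) K : (forall k, (K < k)%nat -> f k = 0) -> is_series f (sum_n f K).
Proof.
  intros H. change (is_lim_seq (sum_n f) (sum_n f K)).
  apply is_lim_seq_ext_loc with (fun _ => sum_n f K). 2: apply is_lim_seq_const.
  exists K. intros k Hk. replace k with (K + (k - K))%nat by lia. induction (k - K)%nat.
  rewrite Nat.add_0_r; auto. rewrite Nat.add_succ_r, sum_Sn, <- IHn. rewrite H by lia.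
  change plus with Rplus. lra.
Qed.

Lemma csum_RtoC (g : nat -> R) l : csum (fun j => RtoC (g j)) l = RtoC (lsum g l).
Proof. induction l; simpl; auto. unfold csum, lsum in *; simpl. rewrite IHl, RtoC_plus. auto. Qed.

Lemma csum_zero c l : (forall x, In x l -> c x = RtoC 0) -> csum c l = RtoC 0.
Proof. induction l; simpl; intros H; auto. unfold csum in *; simpl. rewrite H by auto. rewrite IHl by auto.
  rewrite Cplus_0_l. auto. Qed.

Lemma lower_construct n m : (3 <= m)%nat ->
  exists c, inX c /\ normX c <= 1 /\ normX (Tpow n c) = sqrt (lsum (fun j => INR j + 1) (G n m) / (INR m + 1)).
Proof.
  intros Hm. set (l := G n m). set (D := lsum (fun j => INR j + 1) l).
  assert (HD : 1 <= D).
  { assert (In (2^n*m)%nat l) by apply G_in. destruct l as [|x l']; [destruct H|].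
    unfold D. rewrite lsum_cons. pose proof (pos_INR x).
    pose proof (lsum_nonneg (fun j => INR j + 1) l' (fun j _ => Rplus_le_le_0_compat _ _ (pos_INR j) Rle_0_1)). lra. }
  pose proof PI_RGT_0 as Hpi.
  set (s := sqrt (PI * D)). assert (Hs : 0 < s) by (apply sqrt_lt_R0; nra).
  assert (Hs2 : s * s = PI * D) by (apply sqrt_sqrt; nra).
  set (al := / s).
  set (c := fun j => if existsb (Nat.eqb j) l then RtoC (al * (INR j + 1)) else RtoC 0).
  assert (Hinl : forall j, existsb (Nat.eqb j) l = true -> In j l).
  { intros j E. apply existsb_exists in E as [y [Hy E]]. apply Nat.eqb_eq in E. subst; auto. }
  assert (Hinl2 : forall j, In j l -> existsb (Nat.eqb j) l = true).
  { intros j Hj. apply existsb_exists. exists j. split; auto. apply Nat.eqb_refl. }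
  assert (Wc : forall j, wterm c j = if existsb (Nat.eqb j) l then PI / (s*s) * (INR j + 1) else 0).
  { intros j. unfold wterm, c. destruct (existsb (Nat.eqb j) l) eqn:E.
    - pose proof (G_ge3 n m j Hm (Hinl j E)). destruct (Nat.leb_spec 3 j); [|lia].
      rewrite Cmod_R, pow2_abs. unfold omega0, al. field. pose proof (pos_INR j); repeat split; lra.
    - destruct (3 <=? j)%nat; auto. rewrite Cmod_0. unfold Rdiv. ring. }
  set (K := (2^n*m)%nat).
  assert (Hsup : forall k, (K < k)%nat -> wterm c k = 0).
  { intros k Hk. rewrite Wc. destruct (existsb (Nat.eqb k) l) eqn:E; auto.
    apply Hinl in E. apply G_le in E. unfold K in Hk. lia. }
  assert (Sc : Series (wterm c) = 1).
  { apply is_series_unique. replace 1 with (sum_n (wterm c) K). apply finite_series; auto.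
    rewrite (sum_n_ext _ (fun j => if existsb (Nat.eqb j) l then PI / (s*s) * (INR j + 1) else 0)) by apply Wc.
    rewrite indicator. rewrite lsum_scal. fold D. rewrite Hs2. clear -HD Hpi. change (PI / (PI * D) * D = 1). field. split; lra.
    apply G_nodup. intros; apply G_le; auto. }
  assert (Tc : forall m', (3 <= m')%nat -> Tpow n c m' = if Nat.eqb m' m then RtoC (al * D) else RtoC 0).
  { intros m' Hm'. rewrite Tpow_eq by auto. destruct (Nat.eqb_spec m' m).
    - subst. rewrite (csum_ext _ (fun j => RtoC (al * (INR j + 1)))).
      + rewrite csum_RtoC, lsum_scal. auto.
      + intros x Hx. unfold c. rewrite Hinl2; auto.
    - apply csum_zero. intros x Hx. unfold c. destruct (existsb (Nat.eqb x) l) eqn:E; auto.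
      apply Hinl in E. apply G_T in E. apply G_T in Hx. congruence. }
  set (V := al * D * (al * D) / omega0 m).
  assert (WT : forall m', wterm (Tpow n c) m' = if Nat.eqb m' m then V else 0).
  { intros m'. unfold wterm. destruct (Nat.leb_spec 3 m').
    - rewrite Tc by auto. destruct (Nat.eqb_spec m' m).
      + rewrite Cmod_R, pow2_abs. subst m'. unfold V. simpl. rewrite Rmult_1_r. reflexivity.
      + rewrite Cmod_0. unfold Rdiv. ring.
    - destruct (Nat.eqb_spec m' m); auto. lia. }
  assert (ST : Series (wterm (Tpow n c)) = V).
  { apply is_series_unique. replace V with (sum_n (wterm (Tpow n c)) m).
    apply finite_series. intros k Hk. rewrite WT. destruct (Nat.eqb_spec k m); auto; lia.
    rewrite (sum_n_ext _ _ _ WT). rewrite spikeR. rewrite Nat.leb_refl. auto. }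
  exists c. split; [|split].
  - split.
    + intros k Hk. unfold c. destruct (existsb (Nat.eqb k) l) eqn:E; auto.
      apply Hinl in E. apply G_ge3 in E; auto. lia.
    + exists (sum_n (wterm c) K). apply finite_series; auto.
  - unfold normX. rewrite Sc, sqrt_1. lra.
  - unfold normX. rewrite ST. f_equal. unfold V, omega0, al. fold D. field_simplify_eq.
    2: { pose proof (pos_INR m). repeat split; lra. }
    replace (s ^ 2) with (s * s) by ring. rewrite Hs2. field. 
Qed.

Open Scope R_scope.

Theorem proposition4p2 (n : nat) (hn : (1 <= n)%nat) :
  Rbar_mult (opnorm n) (opnorm n) = Finite (maxS n).
Proof.
  set (M := maxS n). pose proof (maxS_nonneg n) as M0. fold M in M0.
  set (s := sqrt M).
  set (E := fun x => exists c, inX c /\ normX c <= 1 /\ x = normX (Tpow n c)).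
  assert (UB : forall x, E x -> x <= s).
  { intros x [c [Hc [Hn ->]]]. unfold normX, s. apply sqrt_le_1_alt.
    eapply Rle_trans. apply Series_T_bound; auto. fold M.
    assert (Series (wterm c) <= 1).
    { unfold normX in Hn. destruct (Rle_lt_dec (Series (wterm c)) 0). lra.
      pose proof (sqrt_sqrt (Series (wterm c)) ltac:(lra)). pose proof (sqrt_pos (Series (wterm c))). nra. }
    nra. }
  destruct (maxS_attained n) as [r [Hr HM]]. fold M in HM.
  assert (P3n : (3 <= 3^n)%nat) by (destruct n; [lia|]; rewrite Nat.pow_succ_r'; pose proof (Nat.pow_nonzero 3 n); lia).
  assert (LB : forall xi, (1 <= xi)%nat -> exists x, E x /\ 0 <= x /\
      M - 2^n*2^n / (INR (3^n*xi+r) + 1) <= x * x).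
  { intros xi Hxi. set (m := (3^n*xi+r)%nat). assert (Hm : (3 <= m)%nat) by (unfold m; nia).
    destruct (lower_construct n m Hm) as [c [Hc [Hn Ht]]].
    set (D := lsum (fun j => INR j + 1) (G n m)) in *.
    exists (sqrt (D / (INR m + 1))). split. exists c. auto.
    assert (0 < INR m + 1) by (pose proof (pos_INR m); lra).
    assert (0 <= D) by (apply lsum_nonneg; intros; pose proof (pos_INR x); lra).
    split. apply sqrt_pos. rewrite sqrt_sqrt by (apply Rdiv_le_0_compat; lra).
    pose proof (lower_G n r xi) as L. fold m in L. fold D in L. rewrite <- HM in L. fold M in L.
    apply (Rmult_le_reg_r (INR m + 1)); auto.
    replace ((M - 2 ^ n * 2 ^ n / (INR m + 1)) * (INR m + 1)) with (M * (INR m + 1) - 2^n*2^n) by (field; lra).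
    replace (D / (INR m + 1) * (INR m + 1)) with D by (field; lra). lra. }
  pose proof (Lub_Rbar_correct E) as [Hub Hleast].
  assert (Le1 : Rbar_le (Lub_Rbar E) (Finite s)).
  { apply Hleast. intros x Hx. apply UB; auto. }
  destruct (LB 1%nat (le_n _)) as [x1 [Ex1 [x10 _]]].
  assert (Le0 : Rbar_le (Finite x1) (Lub_Rbar E)) by (apply Hub; auto).
  assert (EQ : Lub_Rbar E = Finite s).
  { destruct (Lub_Rbar E) as [l| |] eqn:El; simpl in Le1, Le0; try contradiction.
    f_equal. destruct (Rle_lt_dec s l) as [?|Hlt]; [lra|]. exfalso.
    assert (l0 : 0 <= l) by lra.
    assert (Hl2 : l * l < M).
    { unfold s in Hlt. rewrite <- (sqrt_sqrt M) by auto. apply Rmult_le_0_lt_compat; lra. }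
    destruct (INR_archimed (M - l*l) (2^n*2^n) ltac:(lra)) as [k Hk].
    destruct (LB (S k) ltac:(lia)) as [x [Ex [x0 Hx]]].
    assert (Rbar_le (Finite x) (Finite l)) by (apply Hub; auto). simpl in H.
    assert (INR k <= INR (3^n*S k + r) + 1).
    { assert (k <= 3^n*S k + r)%nat by nia. apply le_INR in H0. lra. }
    assert (0 < INR (3^n*S k + r) + 1) by (pose proof (pos_INR (3^n*S k + r)); lra).
    assert (2^n*2^n / (INR (3^n*S k + r) + 1) < M - l*l).
    { apply Rlt_div_l; auto. assert (0 <= M - l*l) by lra. nra. }
    assert (x * x <= l * l) by (apply Rmult_le_compat; lra). lra. }
  change (opnorm n) with (Lub_Rbar E). rewrite EQ. simpl. f_equal. unfold s. apply sqrt_sqrt. auto.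
Qed.
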